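(* Let $k\in\mathbb{N}$ and let $\phi:\mathbb{M}_n\to\mathbb{M}_m$ be a $(k+1)$-positive linear map. Then $\mathrm{id}_k\otimes\phi:\mathbb{M}_k\otimes\mathbb{M}_n\to\mathbb{M}_k\otimes\mathbb{M}_m$ is a generalized Schwarz map.
   Context: $\mathbb{M}_n$ denotes the $n\times n$ complex matrices; $\mathrm{id}_k$ is the identity map on $\mathbb{M}_k$, and $\mathbb{M}_k\otimes\mathbb{M}_n\cong\mathbb{M}_{kn}$. A linear map $\phi$ is $j$-positive if $\mathrm{id}_j\otimes\phi$ maps positive semidefinite matrices to positive semidefinite matrices. A linear map $\psi:\mathbb{M}_N\to\mathbb{M}_M$ is a generalized Schwarz map if for all $K\in\mathbb{M}_N$ the block matrix $\begin{pmatrix}\psi(\mathbf{1}_N) & \psi(K)\\ \psi(K)^* & \psi(K^*K)\end{pmatrix}$ is positive semidefinite. *)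

(* Defs.v *)
From HB Require Import structures.
From mathcomp Require Import all_boot all_order all_algebra.
Set Implicit Arguments. Unset Strict Implicit. Unset Printing Implicit Defensive.
Import Order.TTheory GRing.Theory Num.Theory.
Local Open Scope ring_scope.

(* Complex scalars: an arbitrary numClosedFieldType C (e.g. the complex numbers). *)

Definition ctrmx (C : numClosedFieldType) (p q : nat) (A : 'M[C]_(p, q)) : 'M[C]_(q, p) :=
  (map_mx Num.conj A)^T.

(* positive semidefinite: v^* A v >= 0 for every column vector v
   (over a numClosedField this forces A to be Hermitian) *)
Definition psdmx (C : numClosedFieldType) (p : nat) (A : 'M[C]_p) : Prop :=
  forall v : 'cV[C]_p, 0 <= (ctrmx v *m A *m v) 0 0.

(* decomposition of an index of 'I_(j * p) as a pair in 'I_j * 'I_p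
   (inverse of mathcomp's mxvec_index) : the identification M_j (x) M_p = M_(j p) *)
Definition split_index (j p : nat) (r : 'I_(j * p)) : 'I_j * 'I_p :=
  enum_val (cast_ord (esym (mxvec_cast j p)) r).

(* the (i, i') block of X : 'M_(j*n), i.e. X = sum_{i,i'} E_{i i'} (x) blk X i i' *)
Definition blk (C : numClosedFieldType) (j n : nat) (X : 'M[C]_(j * n)) (i i' : 'I_j)
  : 'M[C]_n := \matrix_(c, d) X (mxvec_index i c) (mxvec_index i' d).

(* id_j (x) phi : M_j (x) M_n -> M_j (x) M_m, acting blockwise *)
Definition tens_id (C : numClosedFieldType) (n m : nat) (j : nat)
  (phi : 'M[C]_n -> 'M[C]_m) (X : 'M[C]_(j * n)) : 'M[C]_(j * m) :=
  \matrix_(r, s) phi (blk X (split_index r).1 (split_index s).1)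
                     (split_index r).2 (split_index s).2.
Arguments tens_id {C n m} j phi X.

Definition j_positive (C : numClosedFieldType) (n m : nat) (j : nat)
  (phi : 'M[C]_n -> 'M[C]_m) : Prop :=
  forall X : 'M[C]_(j * n), psdmx X -> psdmx (tens_id j phi X).

Arguments j_positive {C n m} j phi.

Definition gen_schwarz (C : numClosedFieldType) (N M : nat)
  (psi : 'M[C]_N -> 'M[C]_M) : Prop :=
  forall K : 'M[C]_N,
    psdmx (block_mx (psi 1%:M) (psi K) (ctrmx (psi K)) (psi (ctrmx K *m K))).

(* Main.v *)
Require Import Defs.
From HB Require Import structures.
From mathcomp Require Import all_boot all_order all_algebra.
From mathcomp Require Import ring.
Set Implicit Arguments. Unset Strict Implicit. Unset Printing Implicit Defensive.
Import Order.TTheory GRing.Theory Num.Theory.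
Local Open Scope ring_scope.

Section S.
Variable C : numClosedFieldType.

Definition form p q (x : 'cV[C]_p) (M : 'M[C]_(p,q)) (y : 'cV[C]_q) : C :=
  \sum_c \sum_d (x c 0)^* * M c d * y d 0.

Lemma formE p q (x : 'cV[C]_p) (M : 'M[C]_(p,q)) (y : 'cV[C]_q) :
  (ctrmx x *m M *m y) 0 0 = form x M y.
Proof.
rewrite /form mxE (exchange_big); apply: eq_bigr => c _.
rewrite mxE. rewrite big_distrl /=; apply: eq_bigr => d _.
by rewrite !mxE.
Qed.

Lemma split_mi j p (i : 'I_j) (c : 'I_p) : split_index (mxvec_index i c) = (i, c).
Proof. by rewrite /split_index /mxvec_index cast_ordK enum_rankK. Qed.

Lemma mi_split j p (r : 'I_(j * p)) :
  mxvec_index (split_index r).1 (split_index r).2 = r.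
Proof.
rewrite /split_index /mxvec_index -surjective_pairing enum_valK.
by rewrite cast_ordKV.
Qed.

Lemma sum_mi j p (F : 'I_(j * p) -> C) :
  \sum_r F r = \sum_i \sum_c F (mxvec_index i c).
Proof.
rewrite pair_big /=.
rewrite (reindex (fun x : 'I_j * 'I_p => mxvec_index x.1 x.2)) //=.
exists (@split_index j p) => x _; first by rewrite split_mi -surjective_pairing.
by rewrite mi_split.
Qed.

Lemma psd_form p (A : 'M[C]_p) : psdmx A <-> forall v, 0 <= form v A v.
Proof. by split => H v; [rewrite -formE; apply: H | rewrite formE; apply: H]. Qed.

Definition vec_of j p (U : 'I_j -> 'cV[C]_p) : 'cV[C]_(j * p) :=
  \col_r U (split_index r).1 (split_index r).2 0.

Lemma form_sum2 j p (M : 'M[C]_(j * p)) (v : 'cV[C]_(j * p)) :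
  form v M v = \sum_i \sum_c \sum_i' \sum_d
     (v (mxvec_index i c) 0)^* * M (mxvec_index i c) (mxvec_index i' d) * v (mxvec_index i' d) 0.
Proof.
rewrite /form sum_mi; apply: eq_bigr => i _; apply: eq_bigr => c _.
by rewrite sum_mi.
Qed.

Lemma psd_rank1 p (y : 'cV[C]_p) : psdmx (y *m ctrmx y).
Proof.
apply/psd_form => v.
set s := \sum_c (v c 0)^* * y c 0.
have -> : form v (y *m ctrmx y) v = s * s^*.
  rewrite /s rmorph_sum big_distrl /=; apply: eq_bigr => c _.
  rewrite big_distrr /=; apply: eq_bigr => d _.
  rewrite !mxE big_ord1 !mxE rmorphM /= conjCK.
  by rewrite mulrC; ring.
exact: mul_conjC_ge0.
Qed.

Variables (n m k : nat) (phi : {linear 'M[C]_n -> 'M[C]_m}).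
Hypothesis Hpos : j_positive k.+1 phi.

Lemma HypS (U : 'I_k.+1 -> 'cV[C]_n) (W : 'I_k.+1 -> 'cV[C]_m) :
  0 <= \sum_s \sum_t form (W s) (phi (U s *m ctrmx (U t))) (W t).
Proof.
have := Hpos (psd_rank1 (vec_of U)) => /psd_form /(_ (vec_of W)).
rewrite form_sum2.
have blkE : forall s t, blk (vec_of U *m ctrmx (vec_of U)) s t = U s *m ctrmx (U t).
  move=> s t; apply/matrixP => c d; rewrite !mxE !big_ord1 !mxE.
  by rewrite !split_mi.

move=> H; apply: (le_trans H); rewrite le_eqVlt; apply/orP; left; apply/eqP.
apply: eq_bigr => s _.
rewrite exchange_big /= /form; apply: eq_bigr => t _.
apply: eq_bigr => c _; apply: eq_bigr => d _.
by rewrite !mxE !split_mi /= blkE.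
Qed.

Lemma formZl p q (x : 'cV[C]_p) (M : 'M[C]_(p,q)) y al :
  form (al *: x) M y = al^* * form x M y.
Proof.
rewrite /form mulr_sumr; apply: eq_bigr => c _; rewrite mulr_sumr; apply: eq_bigr => d _.
by rewrite !mxE rmorphM /=; ring.
Qed.

Lemma formZr p q (x : 'cV[C]_p) (M : 'M[C]_(p,q)) y al :
  form x M (al *: y) = al * form x M y.
Proof.
rewrite /form mulr_sumr; apply: eq_bigr => c _; rewrite mulr_sumr; apply: eq_bigr => d _.
by rewrite !mxE; ring.
Qed.

Lemma formZM p q (x : 'cV[C]_p) (M : 'M[C]_(p,q)) y al :
  form x (al *: M) y = al * form x M y.
Proof.
rewrite /form mulr_sumr; apply: eq_bigr => c _; rewrite mulr_sumr; apply: eq_bigr => d _.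
by rewrite !mxE; ring.
Qed.

Lemma form_sumM p q I (r : seq I) (P : pred I) (x : 'cV[C]_p) (M : I -> 'M[C]_(p,q)) y :
  form x (\sum_(i <- r | P i) M i) y = \sum_(i <- r | P i) form x (M i) y.
Proof.
rewrite -formE mulmx_sumr mulmx_suml summxE; apply: eq_bigr => i _.
by rewrite formE.
Qed.

Lemma form_ctr p q (x : 'cV[C]_p) (M : 'M[C]_(p,q)) y :
  form y (ctrmx M) x = (form x M y)^*.
Proof.
rewrite /form rmorph_sum exchange_big; apply: eq_bigr => c _.
rewrite rmorph_sum; apply: eq_bigr => d _.
by rewrite !mxE !rmorphM /= conjCK; ring.
Qed.

Lemma form_block p q (v : 'cV[C]_(p + q)) P Z Z' Q :
  form v (block_mx P Z Z' Q) v =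
  form (usubmx v) P (usubmx v) + form (usubmx v) Z (dsubmx v)
  + form (dsubmx v) Z' (usubmx v) + form (dsubmx v) Q (dsubmx v).
Proof.
rewrite -!formE -{1 2}(vsubmxK v).
have -> : ctrmx (col_mx (usubmx v) (dsubmx v)) = row_mx (ctrmx (usubmx v)) (ctrmx (dsubmx v)).
  by rewrite /ctrmx map_col_mx tr_col_mx.
rewrite mul_row_block mul_row_col !mulmxDl !mxE.
by rewrite !addrA; congr (_ + _); rewrite -!addrA; congr (_ + _); rewrite addrC.
Qed.

Definition blkv j p (x : 'cV[C]_(j * p)) (i : 'I_j) : 'cV[C]_p :=
  \col_c x (mxvec_index i c) 0.

Lemma form_tens (Y : 'M[C]_(k * n)) (x y : 'cV[C]_(k * m)) :
  form x (tens_id k phi Y) y =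
  \sum_i \sum_i' form (blkv x i) (phi (blk Y i i')) (blkv y i').
Proof.
rewrite /form sum_mi; apply: eq_bigr => i _.
under eq_bigr do rewrite sum_mi.
rewrite exchange_big; apply: eq_bigr => i' _; apply: eq_bigr => c _; apply: eq_bigr => d _.
by rewrite !mxE !split_mi.
Qed.

Lemma sum_recl2 (F : 'I_k.+1 -> 'I_k.+1 -> C) :
  \sum_s \sum_t F s t = F ord0 ord0 + \sum_t F ord0 (lift ord0 t)
     + \sum_s F (lift ord0 s) ord0 + \sum_s \sum_t F (lift ord0 s) (lift ord0 t).
Proof.
rewrite big_ord_recl big_ord_recl.
under [in X in _ + X]eq_bigr do rewrite big_ord_recl.
by rewrite big_split /= !addrA.
Qed.

Variable K : 'M[C]_(k * n).

Definition ec (c : 'I_n) : 'cV[C]_n := delta_mx c 0.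
Definition RR (j : 'I_k) (c : 'I_n) (i : 'I_k) : 'cV[C]_n :=
  \col_d (K (mxvec_index j c) (mxvec_index i d))^*.
Definition UU j c (s : 'I_k.+1) : 'cV[C]_n :=
  match unlift ord0 s with Some i => RR j c i | None => ec c end.
Definition WW (al : C) (x y : 'cV[C]_(k * m)) (j : 'I_k) (s : 'I_k.+1) : 'cV[C]_m :=
  match unlift ord0 s with Some i => al *: blkv y i | None => blkv x j end.

Lemma mi_eq j p (i i' : 'I_j) (c d : 'I_p) :
  (mxvec_index i c == mxvec_index i' d) = ((i == i') && (c == d)).
Proof.
apply/eqP/andP => [H|[/eqP-> /eqP->] //].
by have := congr1 (@split_index j p) H; rewrite !split_mi => -[-> ->].
Qed.

Lemma ecE c : ec c *m ctrmx (ec c) = delta_mx c c.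
Proof. by rewrite /ec /ctrmx map_delta_mx trmx_delta mul_delta_mx. Qed.

Lemma form0M p q (x : 'cV[C]_p) (y : 'cV[C]_q) : form x 0 y = 0.
Proof. by rewrite -(scale0r 0) formZM mul0r. Qed.

Lemma sumP (x : 'cV[C]_(k * m)) :
  \sum_j \sum_c form (blkv x j) (phi (ec c *m ctrmx (ec c))) (blkv x j)
  = form x (tens_id k phi 1%:M) x.
Proof.
rewrite form_tens; apply: eq_bigr => j _.
rewrite -form_sumM -linear_sum.
rewrite [RHS](bigD1 j) //= [X in _ = _ + X]big1 ?addr0.
  rewrite (_ : \sum_c _ = blk 1%:M j j) //.
  under eq_bigr do rewrite ecE.
  rewrite -mx1_sum_delta; apply/matrixP => c d.
  by rewrite !mxE mi_eq eqxx.
move=> i /negPf ji.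
rewrite (_ : blk 1%:M j i = 0) ?linear0 ?form0M //.
by apply/matrixP => c d; rewrite !mxE mi_eq eq_sym ji.
Qed.

Lemma sumZ (x y : 'cV[C]_(k * m)) :
  \sum_j \sum_c \sum_t form (blkv x j) (phi (ec c *m ctrmx (RR j c t))) (blkv y t)
  = form x (tens_id k phi K) y.
Proof.
rewrite form_tens; apply: eq_bigr => j _.
rewrite exchange_big; apply: eq_bigr => t _.
rewrite -form_sumM -linear_sum.
rewrite (_ : \sum_c _ = blk K j t) //.
apply/matrixP => c' d; rewrite summxE (bigD1 c') //= big1 ?addr0.
  by rewrite !mxE big_ord1 !mxE !eqxx /= mul1r conjCK.
by move=> c2 /negPf nc; rewrite !mxE big_ord1 !mxE eq_sym nc mul0r.
Qed.

Lemma sumQ (y : 'cV[C]_(k * m)) :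
  \sum_j \sum_c \sum_s \sum_t form (blkv y s) (phi (RR j c s *m ctrmx (RR j c t))) (blkv y t)
  = form y (tens_id k phi (ctrmx K *m K)) y.
Proof.
rewrite form_tens pair_big /= exchange_big; apply: eq_bigr => s _.
rewrite exchange_big; apply: eq_bigr => t _.
rewrite -form_sumM -linear_sum.
congr form; congr (phi _).
apply/matrixP => d d'; rewrite summxE !mxE sum_mi pair_big /=; apply: eq_bigr => x _.
by rewrite !mxE big_ord1 !mxE conjCK.
Qed.

Lemma S_expand al (x y : 'cV[C]_(k * m)) j c :
 \sum_s \sum_t form (WW al x y j s) (phi (UU j c s *m ctrmx (UU j c t))) (WW al x y j t)
 = form (blkv x j) (phi (ec c *m ctrmx (ec c))) (blkv x j)
   + al * \sum_t form (blkv x j) (phi (ec c *m ctrmx (RR j c t))) (blkv y t)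
   + al^* * \sum_s form (blkv y s) (phi (RR j c s *m ctrmx (ec c))) (blkv x j)
   + (al^* * al) * \sum_s \sum_t form (blkv y s) (phi (RR j c s *m ctrmx (RR j c t))) (blkv y t).
Proof.
rewrite sum_recl2 /WW /UU unlift_none.
under eq_bigr do rewrite liftK formZr.
under [X in _ + _ + X + _]eq_bigr do rewrite liftK formZl.
under [X in _ + _ + _ + X]eq_bigr do (under eq_bigr do rewrite !liftK formZl formZr mulrA).
rewrite !mulr_sumr; congr (_ + _); apply: eq_bigr => i _; by rewrite mulr_sumr.
Qed.

Lemma Fexp al (x y : 'cV[C]_(k * m)) :
  \sum_j \sum_c \sum_s \sum_t
     form (WW al x y j s) (phi (UU j c s *m ctrmx (UU j c t))) (WW al x y j t)
  = form x (tens_id k phi 1%:M) x + al * form x (tens_id k phi K) y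
    + al^* * (\sum_j \sum_c \sum_s form (blkv y s) (phi (RR j c s *m ctrmx (ec c))) (blkv x j))
    + (al^* * al) * form y (tens_id k phi (ctrmx K *m K)) y.
Proof.
under eq_bigr do under eq_bigr do rewrite S_expand.
rewrite -sumP -sumZ -sumQ !mulr_sumr -!big_split /=.
apply: eq_bigr => j _; rewrite !mulr_sumr -!big_split /=.
by apply: eq_bigr => c _.
Qed.

Lemma Fge0 al (x y : 'cV[C]_(k * m)) :
  0 <= form x (tens_id k phi 1%:M) x + al * form x (tens_id k phi K) y
    + al^* * (\sum_j \sum_c \sum_s form (blkv y s) (phi (RR j c s *m ctrmx (ec c))) (blkv x j))
    + (al^* * al) * form y (tens_id k phi (ctrmx K *m K)) y.
Proof.
rewrite -Fexp; apply: sumr_ge0 => j _; apply: sumr_ge0 => c _; exact: HypS.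
Qed.

Lemma mainK :
  psdmx (block_mx (tens_id k phi 1%:M) (tens_id k phi K)
          (ctrmx (tens_id k phi K)) (tens_id k phi (ctrmx K *m K))).
Proof.
apply/psd_form => v; rewrite form_block form_ctr.
set x := usubmx v; set y := dsubmx v.
set p := form x _ x; set z := form x _ y; set q := form y _ y.
set Z := \sum_j \sum_c \sum_s form (blkv y s) (phi (RR j c s *m ctrmx (ec c))) (blkv x j).
have F1 := Fge0 1 x y; have F2 := Fge0 (-1) x y; have F3 := Fge0 'i x y.
rewrite -/p -/z -/q -/Z rmorph1 !mul1r in F1.
rewrite -/p -/z -/q -/Z rmorphN1 mulrNN !mulN1r !mul1r in F2.
rewrite -/p -/z -/q -/Z conjCi in F3. rewrite mulNr in F3. rewrite mulNr mulCii opprK mul1r in F3.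
have s0 : 0 <= p + q.
  rewrite -(pmulrn_lge0 _ (isT : (0 < 2)%N)).
  have -> : (p + q) *+ 2 = (p + z + Z + q) + (p + - z + - Z + q) by ring.
  exact: addr_ge0.
have sR := ger0_real s0.
have hx : (z + Z)^* = z + Z.
  apply: conj_Creal.
  have -> : z + Z = (p + z + Z + q) - (p + q) by ring.
  by apply: realB => //; apply: ger0_real.
have hy : ('i * (z - Z))^* = 'i * (z - Z).
  apply: conj_Creal.
  have -> : 'i * (z - Z) = (p + 'i * z + - ('i * Z) + q) - (p + q) by ring.
  by apply: realB => //; apply: ger0_real.
rewrite rmorphD /= in hx; rewrite rmorphM rmorphB /= conjCi in hy.
have E : (Z^* - z) *+ 2 = 
   (z^* + Z^* - (z + Z)) + 'i * ('i * (z - Z) - (- 'i) * (z^* - Z^*))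
   - ('i * 'i + 1) * (z - Z + z^* - Z^*) by ring.
rewrite hx hy mulCii addNr mul0r !subrr mulr0 addr0 subr0 in E.
move/eqP: E; rewrite mulrn_eq0 /= subr_eq0 => /eqP hZ.
have -> : z^* = Z by rewrite -hZ conjCK.
exact: F1.
Qed.
End S.

Unset Implicit Arguments.
Theorem theoremA1 (C : numClosedFieldType) (n m k : nat)
  (phi : {linear 'M[C]_n -> 'M[C]_m}) :
  j_positive k.+1 phi -> gen_schwarz (tens_id k phi).
Proof. by move=> Hpos K; apply: mainK. Qed.
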